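(* Let $n\ge 1$, $s\ge 1$, and let $A,B_1,\dots,B_s$ be real symmetric $n\times n$ matrices. Let $\mathcal{L}$ be the real Lie algebra generated by $A,B_1,\dots,B_s$, and let $\hat{\mathcal{L}}$ be the smallest ideal of $\mathcal{L}$ containing $B_1,\dots,B_s$. If $\mathcal{L}=gl(n,\mathbb{R})$ and $\operatorname{tr} B_k\neq 0$ for some $k\in\{1,\dots,s\}$, then $\hat{\mathcal{L}}=gl(n,\mathbb{R})$.
   Context: For matrices $A_1,\dots,A_k\in\mathbb{C}^{n\times n}$, the real Lie algebra generated by them is the smallest real vector space of matrices containing $A_1,\dots,A_k$ and closed under the commutator $[X,Y]=XY-YX$. $gl(n,\mathbb{R})$ denotes the Lie algebra of all real $n\times n$ matrices. *)

(* Defs.v *)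
From HB Require Import structures.
From mathcomp Require Import all_boot all_order all_algebra.
From mathcomp Require Import reals.
Set Implicit Arguments. Unset Strict Implicit. Unset Printing Implicit Defensive.
Import GRing.Theory.
Local Open Scope ring_scope.

Definition mxset (R : realType) (n : nat) := 'M[R]_n -> Prop.

Definition lie_br (R : realType) (n : nat) (X Y : 'M[R]_n) : 'M[R]_n :=
  X *m Y - Y *m X.

Definition is_subspace (R : realType) (n : nat) (S : mxset R n) : Prop :=
  S 0 /\ (forall X Y, S X -> S Y -> S (X + Y)) /\
  (forall (c : R) X, S X -> S (c *: X)).

Definition lie_closed (R : realType) (n : nat) (S : mxset R n) : Prop :=
  forall X Y, S X -> S Y -> S (lie_br X Y).

Definition lie_gen (R : realType) (n : nat) (G : mxset R n) : mxset R n :=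
  fun X => forall S : mxset R n,
    is_subspace S -> lie_closed S -> (forall Y, G Y -> S Y) -> S X.

Definition is_ideal (R : realType) (n : nat) (L I : mxset R n) : Prop :=
  is_subspace I /\ (forall X, I X -> L X) /\
  (forall X Y, L X -> I Y -> I (lie_br X Y)).

Definition ideal_gen (R : realType) (n : nat) (L G : mxset R n) : mxset R n :=
  fun X => forall I : mxset R n, is_ideal L I -> (forall Y, G Y -> I Y) -> I X.

Definition is_gl (R : realType) (n : nat) (S : mxset R n) : Prop :=
  forall X : 'M[R]_n, S X.

(* Main.v *)
Require Import Defs.
From HB Require Import structures.
From mathcomp Require Import all_boot all_order all_algebra.
From mathcomp Require Import reals.
From Stdlib Require Import Classical.
Set Implicit Arguments. Unset Strict Implicit. Unset Printing Implicit Defensive.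
Import GRing.Theory Num.Theory.
Local Open Scope ring_scope.

Definition idl (R : realType) n (I : mxset R n) :=
  is_subspace I /\ forall X Y, I Y -> I (lie_br X Y).

Lemma idl_Z (R : realType) n (I : mxset R n) (c : R) (X : 'M[R]_n) : idl I -> I X -> I (c *: X).
Proof. by case=> [[_ [_ h]] _]; apply: h. Qed.
Lemma idl_D (R : realType) n (I : mxset R n) (X Y : 'M[R]_n) : idl I -> I X -> I Y -> I (X + Y).
Proof. by case=> [[_ [h _]] _]; apply: h. Qed.
Lemma idl_0 (R : realType) n (I : mxset R n) : idl I -> I 0.
Proof. by case=> [[h _] _]. Qed.
Lemma idl_N (R : realType) n (I : mxset R n) (X : 'M[R]_n) : idl I -> I X -> I (- X).
Proof. by move=> hI hX; rewrite -scaleN1r; apply: idl_Z. Qed.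
Lemma idl_B (R : realType) n (I : mxset R n) (X Y : 'M[R]_n) : idl I -> I X -> I Y -> I (X - Y).
Proof. by move=> hI hX hY; apply: idl_D => //; apply: idl_N. Qed.
Lemma idl_br (R : realType) n (I : mxset R n) (X Y : 'M[R]_n) : idl I -> I Y -> I (lie_br X Y).
Proof. by case=> _ h; apply: h. Qed.
Lemma idl_sum (R : realType) n (I : mxset R n) m (F : 'I_m -> 'M[R]_n) :
  idl I -> (forall i, I (F i)) -> I (\sum_i F i).
Proof.
move=> hI hF; apply: (big_ind I); [exact: idl_0 | | by []].
by move=> x y; apply: idl_D.
Qed.
Lemma idl_unscale (R : realType) n (I : mxset R n) (c : R) (X : 'M[R]_n) : idl I -> c != 0 -> I (c *: X) -> I X.
Proof.
move=> hI c0 h; have := idl_Z (c^-1) hI h.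
by rewrite scalerA mulVf // scale1r.
Qed.
Lemma dMd (R : realType) n (a b c d : 'I_n) (M : 'M[R]_n) :
  delta_mx a b *m M *m delta_mx c d = M b c *: delta_mx a d.
Proof.
apply/matrixP => i j; rewrite !mxE (bigD1 c) //= big1 => [|k /negbTE kc]; last first.
  by rewrite !mxE kc /= mulr0.
rewrite !mxE eqxx /= addr0 (bigD1 b) //= big1 => [|k /negbTE kb]; last first.
  by rewrite !mxE kb andbF mul0r.
rewrite !mxE !eqxx addr0 andbT.
by case: (i == a); case: (j == d); rewrite /= ?mulr1 ?mul1r ?mulr0 ?mul0r.
Qed.
Lemma PXQ_eq (R : realType) n (P Q X : 'M[R]_n) :
  P *m Q = 0 -> Q *m P = 0 -> P *m P = P ->
  lie_br P (lie_br Q X) + lie_br P (lie_br P (lie_br Q X)) = - (P *m X *m Q *+ 2).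
Proof.
move=> PQ QP PP; rewrite /lie_br.
rewrite !mulmxBr !mulmxBl !mulmxA PQ PP !mul0mx.
rewrite -!(mulmxA X Q P) QP !mulmx0.
rewrite -!(mulmxA _ Q P) QP !mulmx0.
rewrite -!(mulmxA _ P P) PP.
rewrite ?mulmxA ?PQ ?mul0mx !subr0 !sub0r !opprK.
set a := P *m X *m Q; set b := Q *m X *m P.
have -> : P *m b = 0 by rewrite /b !mulmxA PQ !mul0mx.
by rewrite subr0 mulr2n opprD addrACA addNr addr0.
Qed.

Lemma idl_PXQ (R : realType) n (I : mxset R n) (p q : 'I_n) X :
  idl I -> p != q -> I X -> I (delta_mx p p *m X *m delta_mx q q).
Proof.
move=> hI pq hX.
have qp : q != p by rewrite eq_sym.
have e := @PXQ_eq R n (delta_mx p p) (delta_mx q q) X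
  (mul_delta_mx_0 _ p q pq) (mul_delta_mx_0 _ q p qp) (mul_delta_mx _ _ _).
apply: (@idl_unscale _ _ _ (- 2%:R) _ hI); first by rewrite oppr_eq0 pnatr_eq0.
rewrite scaleNr scaler_nat -e; apply: idl_D => //; do ! apply: idl_br => //.
Qed.

Lemma br_delta (R : realType) n (a b c d : 'I_n) :
  lie_br (delta_mx a b) (delta_mx c d) =
  (delta_mx a d *+ (b == c) - delta_mx c b *+ (d == a) : 'M[R]_n).
Proof. by rewrite /lie_br !mul_delta_mx_cond. Qed.

Lemma move1 (R : realType) n (I : mxset R n) (i j : 'I_n) :
  idl I -> i != j -> I (delta_mx i j) -> I (delta_mx j i).
Proof.
move=> hI ij h.
have h1 : I (lie_br (delta_mx j i) (delta_mx i j)) by apply: idl_br.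
have h2 := idl_br (delta_mx j i) hI h1.
move: h2; rewrite br_delta !eqxx !mulr1n.
rewrite /lie_br mulmxBr mulmxBl !mul_delta_mx_cond !eqxx (negbTE ij).
rewrite !mulr1n !mulr0n !subr0 sub0r => h2.
apply: (@idl_unscale _ _ _ (- 2%:R) _ hI); first by rewrite oppr_eq0 pnatr_eq0.
by rewrite scaleNr scaler_nat mulr2n opprD.
Qed.

Lemma move2 (R : realType) n (I : mxset R n) (i j k : 'I_n) :
  idl I -> k != j -> I (delta_mx i j) -> I (delta_mx k j).
Proof.
move=> hI kj h; have := idl_br (delta_mx k i) hI h.
by rewrite br_delta eqxx eq_sym (negbTE kj) mulr1n mulr0n subr0.
Qed.

Lemma move3 (R : realType) n (I : mxset R n) (k j l : 'I_n) :
  idl I -> l != k -> I (delta_mx k j) -> I (delta_mx k l).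
Proof.
move=> hI lk h; have := idl_br (delta_mx j l) hI h.
rewrite br_delta eqxx (negbTE lk) mulr1n mulr0n sub0r => h'.
by move: (idl_N hI h'); rewrite opprK.
Qed.

Lemma move (R : realType) n (I : mxset R n) (i j k l : 'I_n) :
  idl I -> i != j -> k != l -> I (delta_mx i j) -> I (delta_mx k l).
Proof.
move=> hI ij kl h; case: (eqVneq k j) kl => [->|kj] kl.
  apply: (@move3 _ _ _ j i l hI); [by rewrite eq_sym | exact: move1].
apply: (@move3 _ _ _ k j l hI); [by rewrite eq_sym | exact: (move2 hI kj h)].
Qed.

Lemma offdiag_of (R : realType) n (I : mxset R n.+1) (M : 'M[R]_n.+1) :
  idl I -> I M -> ~ (exists b, M = b%:M) ->
  exists p q, p != q /\ I (delta_mx p q).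
Proof.
move=> hI hM ns.
have [[p [q [pq h]]] | H] :=
  classic (exists p q, p != q /\ (M p q != 0 \/ M p p != M q q)).
  exists p, q; split => //; case: h => h.
    have := idl_PXQ hI pq hM; rewrite dMd => h'; exact: idl_unscale hI h h'.
  have hY := idl_br (delta_mx p q) hI hM; have := idl_PXQ hI pq hY.
  rewrite /lie_br mulmxBr mulmxBl !mulmxA mul_delta_mx -(mulmxA _ (delta_mx p q)).
  rewrite mul_delta_mx !dMd -scalerBl => h'; apply: idl_unscale hI _ h'.
  by rewrite subr_eq0 eq_sym.
exfalso; apply: ns; exists (M ord0 ord0); apply/matrixP => i j; rewrite mxE.
case: (eqVneq i j) => [<-|ij]; rewrite ?mulr1n ?mulr0n.
  apply/eqP; apply/negPn/negP => ne; apply: H; exists i, ord0; split; last by right.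
  by apply/eqP => e; move: ne; rewrite e eqxx.
apply/eqP; apply/negPn/negP => ne; apply: H; exists i, j; split => //; by left.
Qed.

Lemma sl_in (R : realType) n (I : mxset R n.+1) :
  idl I -> (forall k l : 'I_n.+1, k != l -> I (delta_mx k l)) ->
  forall X : 'M[R]_n.+1, I (X - \tr X *: delta_mx ord0 ord0).
Proof.
move=> hI hoff X.
have hd : forall k : 'I_n.+1, I (delta_mx k k - delta_mx ord0 ord0).
  move=> k; case: (eqVneq k ord0) => [->|k0]; first by rewrite subrr; apply: idl_0.
  have : ord0 != k by rewrite eq_sym.
  move=> /hoff /(idl_br (delta_mx k ord0) hI).
  by rewrite br_delta !eqxx !mulr1n.
pose F k l := if k == l then X k k *: (delta_mx k k - delta_mx ord0 ord0)
              else X k l *: delta_mx k l.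
have -> : X - \tr X *: delta_mx ord0 ord0 = \sum_k \sum_l F k l.
  rewrite {1}(matrix_sum_delta X) /mxtrace scaler_suml -sumrB.
  apply: eq_bigr => k _.
  rewrite (bigD1 k) //= [in RHS](bigD1 k) //= /F eqxx scalerBr addrAC.
  congr (_ + _); apply: eq_bigr => l lk; by rewrite eq_sym (negbTE lk).
apply: idl_sum => // k; apply: idl_sum => // l; rewrite /F.
by case: (eqVneq k l) => [_|kl]; apply: idl_Z => //; apply: hoff.
Qed.

Lemma commS (R : realType) n (A : 'M[R]_n) (c d c' d' : R) :
  comm_mx (c *: A + d%:M) (c' *: A + d'%:M).
Proof.
have cA : comm_mx A (c *: A + d%:M).
  rewrite -mul_scalar_mx; apply: comm_mxD; last exact: comm_mx_scalar.
  apply: comm_mxM; [exact: comm_mx_scalar | exact: comm_mx_refl].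
rewrite -[c' *: A]mul_scalar_mx; apply: comm_mxD; last exact: comm_mx_scalar.
apply: comm_mxM; [exact: comm_mx_scalar | exact: comm_mx_sym].
Qed.

Unset Implicit Arguments.

Theorem lemma2p2 (R : realType) (n s : nat) (hn : (0 < n)%N) (hs : (0 < s)%N)
  (A : 'M[R]_n) (B : 'I_s -> 'M[R]_n)
  (hA : A^T = A) (hB : forall k, (B k)^T = B k) :
  let L := lie_gen (fun X => X = A \/ exists k, X = B k) in
  let Lhat := ideal_gen L (fun X => exists k, X = B k) in
  is_gl L -> (exists k, \tr (B k) != 0) -> is_gl Lhat.
Proof.
move: A B hA hB; case: n hn => [//|n _] A B hA hB L Lhat hL [k0 hk0] X I.
move=> [[I0 [ID IZ]] [_ Ibr]] IB.
have hI : idl I by split; [split; [|split] | move=> U V; apply: Ibr; apply: hL].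
have IBk : forall k, I (B k) by move=> k; apply: IB; exists k.
have hoff : forall k l : 'I_n.+1, k != l -> I (delta_mx k l).
  move=> k l kl.
  have [[j nj]|allsc] := classic (exists j, ~ exists b, B j = b%:M).
    have [p [q [pq h]]] := offdiag_of hI (IBk j) nj.
    exact: (move hI pq kl h).
  exfalso.
  have sc : forall j, exists b, B j = b%:M.
    by move=> j; apply: NNPP => h; apply: allsc; exists j.
  pose S := fun Z : 'M[R]_n.+1 => exists c d, Z = c *: A + d%:M.
  have [c [d e]] : S (delta_mx k l).
    apply: hL.
    - split; first by exists 0, 0; rewrite scale0r add0r raddf0.
      split.
        move=> U V [c [d ->]] [c' [d' ->]]; exists (c + c'), (d + d').
        by rewrite scalerDl raddfD /= addrACA.
      move=> a U [c [d ->]]; exists (a * c), (a * d).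
      by rewrite scalerDr scalerA scale_scalar_mx.
    - move=> U V [c [d ->]] [c' [d' ->]]; exists 0, 0.
      by rewrite /lie_br commS subrr scale0r add0r raddf0.
    - move=> U [->|[j ->]]; first by exists 1, 0; rewrite scale1r raddf0 addr0.
      have [b ->] := sc j; by exists 0, b; rewrite scale0r add0r.
  have e2 : delta_mx l k = c *: A + d%:M.
    by rewrite -trmx_delta e linearD linearZ /= hA tr_scalar_mx.
  have := congr1 (fun M : 'M[R]_n.+1 => M k l) (etrans e (esym e2)).
  rewrite !mxE !eqxx /= (negbTE kl) eq_sym (negbTE kl) /=.
  by move/eqP; rewrite oner_eq0.
have hsl := sl_in hI hoff.
have E00 : I (delta_mx ord0 ord0).
  have := idl_B hI (IBk k0) (hsl (B k0)).
  rewrite opprB addrC subrK => h; exact: idl_unscale hI hk0 h.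
by rewrite -(subrK (\tr X *: delta_mx ord0 ord0) X); apply: idl_D => //; apply: idl_Z.
Qed.
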